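(* Let $l\ge 2$ be an even integer and let $G=(V,E)$ be a finite, simple, undirected, connected graph whose vertex set is the disjoint union of $l$ sets $\mathcal{C}_1,\dots,\mathcal{C}_l$, where each $\mathcal{C}_j$ induces a complete graph (clique) and all these cliques are identical (same number of vertices, at least two), arranged in a circle: for each $j$ (indices modulo $l$) there is exactly one edge between $\mathcal{C}_j$ and $\mathcal{C}_{j+1}$, and there are no other edges between distinct cliques. Let $\Pi_1=\{\mathcal{C}_1,\dots,\mathcal{C}_l\}$ and let $\Pi_2=\{\mathcal{C}_1\cup\mathcal{C}_2,\ \mathcal{C}_3\cup\mathcal{C}_4,\dots,\mathcal{C}_{l-1}\cup\mathcal{C}_l\}$ be the partition into the $l/2$ pairs of adjacent cliques. Then $\mathcal{P}^{\star}_{\Pi_1}>\mathcal{P}^{\star}_{\Pi_2}$.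
   Context: For a subset $\mathcal{C}\subseteq V$, let $m_i(\mathcal{C})$ be the number of edges with both endpoints in $\mathcal{C}$ and $m_e(\mathcal{C})$ the number of edges with exactly one endpoint in $\mathcal{C}$. The null-adjusted persistence of $\mathcal{C}$ is $\mathcal{P}^{\star}_{\mathcal{C}}=\frac{2m_i}{2m_i+m_e}-\frac{2m_i+m_e}{2m}$, where $m=|E|$. For a partition $\Pi$ of $V$, the total null-adjusted persistence is $\mathcal{P}^{\star}_{\Pi}=\sum_{\mathcal{C}\in\Pi}\mathcal{P}^{\star}_{\mathcal{C}}$. *)

(* Defs.v *)
From HB Require Import structures.
From mathcomp Require Import all_boot all_order all_algebra.
Set Implicit Arguments. Unset Strict Implicit. Unset Printing Implicit Defensive.
Import Order.TTheory GRing.Theory Num.Theory.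

(* A simple undirected graph on a finite vertex type V is given by a
   symmetric irreflexive relation e. Its edge set E consists of the
   unordered pairs {u, v} with e u v. *)
Section Persistence.
Variables (V : finType) (e : rel V).

Definition edges : {set {set V}} := [set [set u; v] | u in V, v in V & e u v].

Definition m_tot : nat := #|edges|.
Definition m_int (C : {set V}) : nat := #|[set A in edges | A \subset C]|.
Definition m_ext (C : {set V}) : nat := #|[set A in edges | #|A :&: C| == 1]|.

Local Open Scope ring_scope.

Definition persist (C : {set V}) : rat :=
  (2 * (m_int C)%:R) / (2 * (m_int C)%:R + (m_ext C)%:R)
  - (2 * (m_int C)%:R + (m_ext C)%:R) / (2 * (m_tot)%:R).

Definition persist_part (Pi : {set {set V}}) : rat :=
  \sum_(C in Pi) persist C.

End Persistence.

(* Main.v *)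
Require Import Defs.
From HB Require Import structures.
From mathcomp Require Import all_boot all_order all_algebra.
From mathcomp Require Import ring lra zify.
Import Order.TTheory GRing.Theory Num.Theory.
Set Implicit Arguments. Unset Strict Implicit. Unset Printing Implicit Defensive.

Definition NN (V : finType) (e : rel V) (A B : {set V}) : nat :=
  #|[set p : V * V | [&& p.1 \in A, p.2 \in B & e p.1 p.2]]|.

Lemma NN_sym (V : finType) (e : rel V) A B : symmetric e -> NN e A B = NN e B A.
Proof.
move=> es; rewrite /NN.
have inj : injective (fun p : V * V => (p.2, p.1)) by move=> [a b] [c d] /= [-> ->].
rewrite -(card_imset _ inj); apply: eq_card => -[u v]; rewrite !inE /=.
apply/imsetP/idP.
  by case=> -[a b]; rewrite inE /= => /and3P[ha hb hab] [-> ->]; rewrite ha hb es.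
by move=> /and3P[hu hv huv]; exists (v, u) => //; rewrite inE /= hu hv es.
Qed.

Lemma NN_splitr (V : finType) (e : rel V) A B D :
  NN e A B = NN e A (B :&: D) + NN e A (B :\: D).
Proof.
rewrite /NN -(cardsID [set p : V * V | p.2 \in D]); congr (_ + _);
  apply: eq_card => -[u v]; rewrite !inE /=;
  by case: (u \in A); case: (v \in D); case: (v \in B); case: (e u v).
Qed.

Lemma NN_splitl (V : finType) (e : rel V) A B D : symmetric e ->
  NN e A B = NN e (A :&: D) B + NN e (A :\: D) B.
Proof.
move=> es; rewrite (NN_sym A B es) (NN_sym (A :&: D) B es) (NN_sym (A :\: D) B es).
exact: NN_splitr.
Qed.

Lemma pair_eq (V : finType) (a b u v : V) :
  [set a; b] = [set u; v] -> a != b -> (a = u /\ b = v) \/ (a = v /\ b = u).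
Proof.
move=> E ab.
have ha : a \in [set u; v] by rewrite -E set21.
have hb : b \in [set u; v] by rewrite -E set22.
case/set2P: ha => ha; case/set2P: hb => hb; rewrite ha hb in ab *; auto;
  by rewrite eqxx in ab.
Qed.

Lemma edgesP (V : finType) (e : rel V) A :
  reflect (exists u v, e u v /\ A = [set u; v]) (A \in edges e).
Proof.
apply: (iffP imset2P).
  by case=> u v _; rewrite inE => huv ->; exists u, v; split.
by case=> u [v [huv ->]]; apply: (@Imset2spec _ _ _ _ _ _ _ u v); rewrite ?inE.
Qed.

Lemma m_extE (V : finType) (e : rel V) C : symmetric e -> irreflexive e ->
  m_ext e C = NN e C (~: C).
Proof.
move=> es ei; rewrite /m_ext /NN.
set S := [set p : V * V | _].
have inj : {in S &, injective (fun p : V * V => [set p.1; p.2])}.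
  move=> [a b] [u v]; rewrite !inE /= => /and3P[ha hb hab] /and3P[hu hv huv] E.
  have ab : a != b by apply: contraTneq hab => ->; rewrite ei.
  case: (pair_eq E ab) => -[e1 e2]; first by rewrite e1 e2.
  by rewrite -e1 ha in hv.
rewrite -(card_in_imset inj); apply: eq_card => A; rewrite !inE.
apply/andP/imsetP.
- case=> /edgesP[u [v [huv ->]]] h1.
  have uv : u != v by apply: contraTneq huv => ->; rewrite ei.
  case hu: (u \in C); case hv: (v \in C).
  + have : [set u; v] :&: C = [set u; v].
      by apply/setIidPl/subsetP => x /set2P[] ->.
    by move=> E; rewrite E cards2 uv in h1.
  + by exists (u, v); rewrite // !inE /= hu hv huv.
  + exists (v, u); [by rewrite !inE /= hu hv es | by rewrite /= setUC].
  + have : [set u; v] :&: C = set0.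
      apply/setP => x; rewrite !inE; case: eqP => [->|_]; rewrite ?hu ?andbF //.
      by case: eqP => [->|_]; rewrite ?hv.
    by move=> E; rewrite E cards0 in h1.
- case=> -[u v]; rewrite inE /= => /and3P[hu hv huv] ->; split.
    by apply/edgesP; exists u, v.
  have -> : [set u; v] :&: C = [set u].
    apply/setP => x; rewrite !inE; case: eqP => [->|_]; rewrite ?hu //.
    by case: eqP => [->|_]; rewrite ?andbF //; move: hv; rewrite inE => /negbTE ->.
  exact/eqP/cards1.
Qed.

Lemma m_intE (V : finType) (e : rel V) C : symmetric e -> irreflexive e ->
  (2 * m_int e C = NN e C C)%N.
Proof.
move=> es ei; rewrite /m_int /NN.
set E' := [set A in edges e | A \subset C].
set S := [set p : V * V | _].
rewrite -[#|S|]sum1_card (partition_big (fun p : V * V => [set p.1; p.2]) (fun A => A \in E')) /=.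
  rewrite mulnC -sum_nat_const; apply: eq_bigr => A.
  rewrite inE => /andP[/edgesP[u [v [huv ->]]] sub].
  have uv : u != v by apply: contraTneq huv => ->; rewrite ei.
  rewrite sum1dep_card (_ : 2 = #|[set (u, v); (v, u)]|); last by rewrite cards2 xpair_eqE (negbTE uv).
  apply: eq_card => -[a b]; rewrite !inE /=.
  have hu : u \in C by apply: (subsetP sub); rewrite set21.
  have hv : v \in C by apply: (subsetP sub); rewrite set22.
  apply/idP/idP.
    case/orP => /eqP [-> ->]; rewrite hu hv /=; first by rewrite huv eqxx.
    by rewrite (es v u) huv setUC eqxx.
  case/andP => /and3P[ha hb hab] /eqP E.
  have ab : a != b by apply: contraTneq hab => ->; rewrite ei.
  by case: (pair_eq E ab) => -[-> ->]; rewrite eqxx ?orbT.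
move=> [a b]; rewrite !inE /= => /and3P[ha hb hab].
apply/andP; split; first by apply/edgesP; exists a, b.
by apply/subsetP => x /set2P[] ->.
Qed.

Local Open Scope ring_scope.

Lemma persistE (V : finType) (e : rel V) C : symmetric e -> irreflexive e ->
  persist e C = (NN e C C)%:R / (NN e C setT)%:R
                - (NN e C setT)%:R / (2 * (m_tot e)%:R).
Proof.
move=> es ei.
have h : NN e C setT = (NN e C C + NN e C (~: C))%N.
  by rewrite (NN_splitr e C setT C) setTI setTD.
by rewrite /persist (m_extE _ es ei) h -(m_intE _ es ei) natrD natrM.
Qed.

Lemma alg (K a b M : rat) : 2 <= K -> K <= a -> K <= b ->
  (2 * K + 2) / (a + b) - (a + b) / M < (K / a - a / M) + (K / b - b / M).
Proof.
move=> hK ha hb.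
have a0 : 0 < a by lra.
have b0 : 0 < b by lra.
have ab0 : 0 < a + b by lra.
suff : (2 * K + 2) / (a + b) < K / a + K / b.
  by rewrite !mulrDl; lra.
rewrite -subr_gt0.
have -> : K / a + K / b - (2 * K + 2) / (a + b)
   = (K * (a - b) ^+ 2 + (2 * K - 2) * a * b) / (a * b * (a + b)).
  by field; rewrite ?(gt_eqF a0) ?(gt_eqF b0) ?(gt_eqF ab0).
apply: divr_gt0; last by rewrite !mulr_gt0.
have : 0 <= K * (a - b) ^+ 2 by rewrite mulr_ge0 ?sqr_ge0 //; lra.
have : 0 < (2 * K - 2) * a * b by rewrite !mulr_gt0 //; lra.
lra.
Qed.

Lemma sum_pairs (F : nat -> rat) n :
  \sum_(0 <= j < 2 * n) F j = \sum_(0 <= i < n) (F (2 * i)%N + F (2 * i + 1)%N).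
Proof.
elim: n => [|n IH]; first by rewrite muln0 !big_geq.
rewrite (_ : (2 * n.+1 = (2 * n).+2)%N); last lia.
by rewrite !big_nat_recr //= IH addrA addn1.
Qed.

Unset Implicit Arguments.
Theorem proposition4 (l k : nat) (V : finType) (e : rel V) (c : V -> 'I_l) :
  (2 <= l)%N -> ~~ odd l -> (2 <= k)%N ->
  symmetric e -> irreflexive e ->
  (forall u v : V, connect e u v) ->
  (forall j : 'I_l, #|[set v | c v == j]| = k) ->
  (forall u v : V, c u = c v -> u != v -> e u v) ->
  (forall j : 'I_l,
     #|[set p : V * V | [&& c p.1 == j, (c p.2 : nat) == (j.+1 %% l)%N
                          & e p.1 p.2]]| = 1%N) ->
  (forall u v : V, e u v -> c u != c v ->
     ((c v : nat) == ((c u).+1 %% l)%N) || ((c u : nat) == ((c v).+1 %% l)%N)) ->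
  (persist_part e [set [set v | c v == j] | j : 'I_l]
   > persist_part e [set [set v | ((c v)./2 == j)%N] | j : 'I_(l./2)])%R.
Proof.
move=> hl hev hk es ei _ hcard hcl hadj _.
pose Cn (n : nat) := [set v | (c v : nat) == n].
have hCn : forall j : 'I_l, [set v | c v == j] = Cn j.
  by move=> j; apply/setP => v; rewrite !inE.
have cardC : forall n, (n < l)%N -> #|Cn n| = k.
  by move=> n hn; rewrite -(hcard (Ordinal hn)) hCn.
pose K := (k * k - k)%N.
have NCC : forall n, (n < l)%N -> NN e (Cn n) (Cn n) = K.
  move=> n hn; rewrite /NN.
  pose Dg := [set (v, v) | v in Cn n].
  have -> : [set p : V * V | [&& p.1 \in Cn n, p.2 \in Cn n & e p.1 p.2]]
            = setX (Cn n) (Cn n) :\: Dg.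
    apply/setP => -[u v]; rewrite !inE /=.
    case: (eqVneq u v) => [<-|uv].
      rewrite ei andbF; case hu: (_ == n); rewrite ?andbF //.
      by have -> : (u, u) \in Dg by apply/imsetP; exists u; rewrite // inE hu.
    have nD : (u, v) \notin Dg.
      by apply/imsetP => -[w _ [e1 e2]]; move: uv; rewrite e1 e2 eqxx.
    rewrite nD.
    case hu: ((c u : nat) == n); case hv: ((c v : nat) == n) => //=.
    by rewrite hcl //; apply: val_inj; rewrite /= (eqP hu) (eqP hv).
  rewrite cardsD (setIidPr _); last first.
    by apply/subsetP => p /imsetP[w hw ->]; rewrite inE /= hw.
  rewrite cardsX card_imset; last by move=> x y [].
  by rewrite cardC.
have Nadj : forall i, (2 * i + 1 < l)%N ->
    NN e (Cn (2 * i)%N) (Cn (2 * i + 1)%N) = 1%N.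
  move=> i hi; have hi' : (2 * i < l)%N by lia.
  rewrite -[RHS](hadj (Ordinal hi')); apply: eq_card => -[u v]; rewrite !inE /=.
  by rewrite modn_small ?addn1 //; lia.
pose D n := NN e (Cn n) setT.
have DK : forall n, (n < l)%N -> (K <= D n)%N.
  by move=> n hn; rewrite /D (NN_splitr e (Cn n) setT (Cn n)) setTI NCC // leq_addr.
pose M : rat := 2 * (m_tot e)%:R.
have P1 : persist_part e [set [set v | c v == j] | j : 'I_l]
    = \sum_(0 <= n < l) (K%:R / (D n)%:R - (D n)%:R / M).
  rewrite /persist_part big_imset /=.
    rewrite big_mkord; apply: eq_big => // j _.
    by rewrite hCn persistE // NCC.
  move=> i j _ _ E.
  have : (0 < #|[set v | c v == i]|)%N by rewrite hcard; lia.
  case/card_gt0P => v hv; move: (hv); rewrite E !inE => /eqP <-.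
  by move: hv; rewrite inE => /eqP.
have P2 : persist_part e [set [set v | ((c v)./2 == j)%N] | j : 'I_(l./2)]
    = \sum_(0 <= i < l./2) ((2 * K%:R + 2) / ((D (2 * i)%N)%:R + (D (2 * i + 1)%N)%:R)
         - ((D (2 * i)%N)%:R + (D (2 * i + 1)%N)%:R) / M).
  rewrite /persist_part big_imset /=.
    rewrite big_mkord; apply: eq_big => // j _.
    have hj : (2 * j + 1 < l)%N by have := ltn_ord j; lia.
    set A := Cn (2 * j)%N; set B := Cn (2 * j + 1)%N.
    have -> : [set v | ((c v)./2 == j)%N] = A :|: B.
      by apply/setP => v; rewrite !inE; lia.
    have hI : (A :|: B) :&: A = A.
      by apply/setP => v; rewrite !inE; case: (_ == _); case: (_ == _).
    have hD : (A :|: B) :\: A = B.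
      by apply/setP => v; rewrite !inE; case: eqP => h1; case: eqP => h2 //=; exfalso; lia.
    have hNT : NN e (A :|: B) setT = (D (2 * j)%N + D (2 * j + 1)%N)%N.
      by rewrite (NN_splitl (A :|: B) setT A es) hI hD.
    have hNP : NN e (A :|: B) (A :|: B) = (2 * K + 2)%N.
      rewrite (NN_splitl (A :|: B) (A :|: B) A es) hI hD.
      rewrite (NN_splitr e A (A :|: B) A) (NN_splitr e B (A :|: B) A) hI hD.
      rewrite (NN_sym B A es) Nadj // !NCC //; lia.
    rewrite persistE // hNT hNP !natrD; congr (_ / _ - _); ring.
  move=> i j _ _ E.
  have hi : (2 * i < l)%N by have := ltn_ord i; lia.
  have : (0 < #|[set v | c v == Ordinal hi]|)%N by rewrite hcard; lia.
  case/card_gt0P => v; rewrite inE => /eqP hv.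
  have : v \in [set v | ((c v)./2 == i)%N] by rewrite inE hv /=; lia.
  rewrite E inE hv /= => /eqP h; apply: val_inj; rewrite /= -h; lia.
have hl2 : (2 * l./2)%N = l.
  by move: (odd_double_half l); rewrite (negbTE hev) add0n -mul2n.
rewrite P1 P2 -[in X in (_ < X)]hl2 sum_pairs.
apply: ltr_sum_nat; first lia.
move=> i /andP[_ hi].
have h1 : (2 * i < l)%N by lia.
have h2 : (2 * i + 1 < l)%N by lia.
apply: alg.
- have hK2 : (2 <= K)%N by rewrite /K; nia.
  by move: hK2; rewrite -(ler_nat rat).
- by rewrite ler_nat DK.
- by rewrite ler_nat DK.
Qed.
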